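(* Let $C\subseteq 2^X$ be an ample class with a representation map $r$, let $B$ be a cube of $2^X$ and $Y\subseteq X$. Then: (1) $r_B:C\cap B\to X(C\cap B)$, $r_B(c)=r(c)\cap\mathrm{supp}(B)$, is a representation map for $C\cap B$; (2) $r^Y:C^Y\to X(C^Y)$ is a representation map for $C^Y$, where for $c\in C^Y$, letting $B_c$ be the unique cube of $C$ with support $Y$ and tag $c$ and $c^{B_c}$ the unique concept of $B_c$ with $r(c^{B_c})\cap Y=Y$, we set $r^Y(c)=r(c^{B_c})\setminus Y$; (3) $r_Y:C_Y\to X(C_Y)$ is a representation map for $C_Y$, where for $c\in C_Y$, letting $B_c$ be the unique cube of $2^X$ with support $Y$ and tag $c$ and $c_{B_c}$ the unique concept of $C\cap B_c$ with $r(c_{B_c})\cap Y=\varnothing$, we set $r_Y(c)=r(c_{B_c})$.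
   Context: Concepts are subsets of the finite set $X$, identified with characteristic functions; $c|Y$ is restriction and $C|Y=\{c|Y:c\in C\}$. $Y$ is shattered by $C$ if $C|Y=2^Y$. A cube of $2^X$ is $\{T\cup Z:Z\subseteq Y\}$ with $Y\subseteq X$ its support $\mathrm{supp}$ and $T\subseteq X\setminus Y$ its tag; a cube of $C$ is one contained in $C$. $C$ is ample if every shattered set is the support of a cube of $C$; $X(C)$ is the family of shattered sets. $C_Y=C|(X\setminus Y)$ (restriction) and the reduction $C^Y$ is the class on $X\setminus Y$ consisting of the tags of all cubes of $C$ with support $Y$; $C\cap B$, $C_Y$, $C^Y$ are ample when $C$ is. A representation map for an ample class $E$ is a bijection $r:E\to X(E)$ with $c|(r(c)\cup r(c'))\ne c'|(r(c)\cup r(c'))$ for all distinct $c,c'\in E$. (For a representation map $r$ of $C$, the concepts $c^{B_c}$ and $c_{B_c}$ above exist and are unique.) *)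

(* Defs.v *)
From mathcomp Require Import all_boot.
Set Implicit Arguments. Unset Strict Implicit. Unset Printing Implicit Defensive.

Section Defs.
Variable X : finType.
Implicit Types (C E : {set {set X}}) (c Y T S : {set X}).

Definition shatters C Y : bool := [set c :&: Y | c in C] == powerset Y.

Definition shattered_sets C : {set {set X}} := [set Y | shatters C Y].

Definition cube Y T : {set {set X}} := [set T :|: Z | Z in powerset Y].

Definition is_cube_of C Y T : bool := [disjoint T & Y] && (cube Y T \subset C).

Definition ample C : Prop := forall Y, shatters C Y -> exists T, is_cube_of C Y T.

(* C_Y = C|(X \ Y), encoded as a class of subsets of X \ Y *)
Definition restriction C Y : {set {set X}} := [set c :&: ~: Y | c in C].

(* C^Y : tags of all cubes of C with support Y (subsets of X \ Y) *)
Definition reduction C Y : {set {set X}} := [set T | is_cube_of C Y T].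

(* r is a representation map for E: a bijection E -> X(E) with the
   non-clashing condition. Only the values of r on E matter. *)
Definition is_repmap E (r : {set X} -> {set X}) : Prop :=
  [/\ {in E &, injective r},
      [set r c | c in E] = shattered_sets E &
      {in E &, forall c c', c != c' ->
          c :&: (r c :|: r c') != c' :&: (r c :|: r c')}].

Definition rup (r : {set X} -> {set X}) Y c : {set X} :=
  if [pick d in cube Y c | r d :&: Y == Y] is Some d then r d :\: Y else set0.

Definition rdown C (r : {set X} -> {set X}) Y c : {set X} :=
  if [pick d in C :&: cube Y c | r d :&: Y == set0] is Some d then r d else set0.

End Defs.

(* Main.v *)
Require Import Defs.
From mathcomp Require Import all_boot zify.
Set Implicit Arguments. Unset Strict Implicit. Unset Printing Implicit Defensive.

Lemma shattersP (X : finType) (D : {set {set X}}) (Y : {set X}) :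
  reflect (forall Z : {set X}, Z \subset Y -> exists2 d, d \in D & d :&: Y = Z) (shatters D Y).
Proof.
apply: (iffP eqP) => [E Z sZ|H].
  have : Z \in powerset Y by rewrite inE.
  by rewrite -E => /imsetP[d dD ->]; exists d.
apply/setP => Z; rewrite inE; apply/imsetP/idP => [[d _ ->]|/H[d dD <-]].
  exact: subsetIr.
by exists d.
Qed.


Lemma shatters_restr (X : finType) (D : {set {set X}}) (W Y : {set X}) :
  shatters [set d :&: W | d in D] Y = (Y \subset W) && shatters D Y.
Proof.
apply/shattersP/andP => [H|[sYW /shattersP H]].
  have sYW : Y \subset W.
    have [d /imsetP[e eD ->] E] := H Y (subxx Y).
    by rewrite -E; apply: subset_trans (subsetIl _ _) (subsetIr _ _).
  split=> //; apply/shattersP => Z /H [d /imsetP[e eD ->] <-].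
  by exists e => //; rewrite -setIA (setIidPr sYW).
move=> Z /H[d dD <-]; exists (d :&: W); first by apply/imsetP; exists d.
by rewrite -setIA (setIidPr sYW).
Qed.

Definition XW (X : finType) (D : {set {set X}}) (W : {set X}) :=
  [set A in shattered_sets D | A \subset W].
Definition part (X : finType) (D : {set {set X}}) (x : X) (b : bool) :=
  [set d in D | (x \in d) == b].

Lemma shatters_mono (X : finType) (D D' : {set {set X}}) Y :
  D \subset D' -> shatters D Y -> shatters D' Y.
Proof.
move=> sDD' /shattersP H; apply/shattersP => Z /H[d dD <-].
by exists d => //; apply: (subsetP sDD').
Qed.

Lemma part_notin (X : finType) (D : {set {set X}}) x b A :
  shatters (part D x b) A -> x \notin A.
Proof.
move=> /shattersP H; apply/negP => xA.
have [d] := H set0 (sub0set _); rewrite inE => /andP[_ /eqP db] dA.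
have [d'] := H A (subxx _); rewrite inE => /andP[_ /eqP db'] dA'.
have xd : x \notin d.
  by apply/negP => xd; move: (dA) => /setP/(_ x); rewrite !inE xd xA.
have xd' : x \in d' by move: xA; rewrite -{1}dA' inE => /andP[].
by move: db db'; rewrite (negbTE xd) xd' => <-.
Qed.

Lemma union_shatter (X : finType) (D : {set {set X}}) x A :
  shatters (part D x false) A -> shatters (part D x true) A -> shatters D (x |: A).
Proof.
move=> h0 h1; have xA := part_notin h0.
move/shattersP: h0 => h0; move/shattersP: h1 => h1.
apply/shattersP => Z sZ.
have sZ' : Z :\ x \subset A.
  apply/subsetP => y; rewrite !inE => /andP[nyx yZ].
  by move/subsetP/(_ y yZ): sZ; rewrite !inE (negbTE nyx).
case xZ: (x \in Z).
  have [d] := h1 _ sZ'; rewrite inE => /andP[dD /eqP xd] dA.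
  exists d => //; apply/setP => y; rewrite !inE.
  case: (eqVneq y x) => [->|nyx] /=; first by rewrite xd xZ.
  by move/setP/(_ y): dA; rewrite !inE nyx.
have [d] := h0 _ sZ'; rewrite inE => /andP[dD /eqP xd] dA.
exists d => //; apply/setP => y; rewrite !inE.
case: (eqVneq y x) => [->|nyx] /=; first by rewrite xd xZ.
by move/setP/(_ y): dA; rewrite !inE nyx.
Qed.

Lemma XW_part_notin (X : finType) (D : {set {set X}}) x b W A :
  A \in XW (part D x b) W -> x \notin A.
Proof. by rewrite !inE => /andP[/part_notin]. Qed.

Lemma split_le (X : finType) (D : {set {set X}}) x W :
  #|XW (part D x false) W| + #|XW (part D x true) W| <= #|XW D (x |: W)|.
Proof.
set U0 := XW (part D x false) W; set U1 := XW (part D x true) W.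
have sP b : part D x b \subset D by apply/subsetP => d; rewrite inE => /andP[].
rewrite -cardsUI.
set J := [set x |: A | A in U0 :&: U1].
have cJ : #|J| = #|U0 :&: U1|.
  apply: card_in_imset => A B /setIP[/XW_part_notin xA _] /setIP[/XW_part_notin xB _] E.
  by rewrite -(setU1K xA) E setU1K.
rewrite -cJ.
have I0 : (U0 :|: U1) :&: J = set0.
  apply/setP => A; rewrite in_set0; apply/negP => /setIP[/setUP[] /XW_part_notin xA /imsetP[B _ eA]];
  by move: xA; rewrite eA setU11.
have := cardsUI (U0 :|: U1) J; rewrite I0 cards0 addn0 => <-.
apply: subset_leq_card; apply/subsetP => A; rewrite !inE => /orP[/orP[]|].
- case/andP=> sA AW; rewrite (shatters_mono (sP _) sA) /=.
  by apply: subset_trans AW (subsetUr _ _).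
- case/andP=> sA AW; rewrite (shatters_mono (sP _) sA) /=.
  by apply: subset_trans AW (subsetUr _ _).
case/imsetP=> B; rewrite !inE => /andP[/andP[s0 BW] /andP[s1 _]] ->.
by rewrite union_shatter // setUS.
Qed.

Lemma card_part (X : finType) (D : {set {set X}}) x :
  #|part D x false| + #|part D x true| = #|D|.
Proof.
rewrite -(cardsID [set d : {set X} | x \in d] D) addnC.
have -> : part D x false = D :\: [set d : {set X} | x \in d].
  by apply/setP=> d; rewrite !inE; case: (x \in d); rewrite ?andbT ?andbF.
have -> : part D x true = D :&: [set d : {set X} | x \in d].
  by apply/setP=> d; rewrite !inE; case: (x \in d); rewrite ?andbT ?andbF.
by [].
Qed.

Lemma XW_setT (X : finType) (D : {set {set X}}) : XW D setT = shattered_sets D.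
Proof. by apply/setP => A; rewrite !inE subsetT andbT. Qed.

Lemma pajor (X : finType) (D : {set {set X}}) : #|D| <= #|shattered_sets D|.
Proof.
have [n] := ubnP #|D|; elim: n D => // n IH D lt.
case: (leqP #|D| 1) => [le1|gt1].
  case: (posnP #|D|) => [->//|pos].
  have [d dD] : exists d, d \in D by apply/set0Pn; rewrite -card_gt0.
  have : set0 \in shattered_sets D.
    rewrite inE; apply/shattersP => Z; rewrite subset0 => /eqP ->.
    by exists d; rewrite ?setI0.
  by move=> h; apply: leq_trans le1 _; rewrite card_gt0; apply/set0Pn; exists set0.
case/card_gt1P: gt1 => d [d' [dD d'D ndd]].
have [x hx] : exists x, (x \in d) != (x \in d').
  case: (pickP [pred x | (x \in d) != (x \in d')]) => [x /= hx|H]; first by exists x.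
  by move/eqP: ndd; case; apply/setP => y; move: (H y) => /= /negbFE/eqP.
have pos b : 0 < #|part D x b|.
  apply/card_gt0P; case: b; case xd: (x \in d) hx; case xd': (x \in d') => //= _.
  - by exists d; rewrite inE dD xd.
  - by exists d'; rewrite inE d'D xd'.
  - by exists d'; rewrite inE d'D xd'.
  - by exists d; rewrite inE dD xd.
have cp := card_part D x.
have l0 : #|part D x false| < n by move: (pos true) lt; rewrite -cp; lia.
have l1 : #|part D x true| < n by move: (pos false) lt; rewrite -cp; lia.
have := split_le D x setT.
rewrite -!XW_setT (_ : x |: setT = setT); last by apply/setP => y; rewrite !inE orbT.
rewrite -cp !XW_setT; move: (IH _ l0) (IH _ l1); lia.
Qed.

Lemma pajor_restr (X : finType) (D : {set {set X}}) (W : {set X}) :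
  #|[set d :&: W | d in D]| <= #|XW D W|.
Proof.
have := pajor [set d :&: W | d in D].
suff -> : shattered_sets [set d :&: W | d in D] = XW D W by [].
by apply/setP => A; rewrite !inE shatters_restr andbC.
Qed.

Definition nonclash (X : finType) (D : {set {set X}}) (s : {set X} -> {set X}) :=
  {in D &, forall c c', c != c' -> c :&: (s c :|: s c') != c' :&: (s c :|: s c')}.

Lemma nc_le (X : finType) (D : {set {set X}}) s (W : {set X}) :
  nonclash D s -> #|[set d in D | s d \subset W]| <= #|XW D W|.
Proof.
move=> nc; apply: leq_trans (pajor_restr D W).
rewrite -(@card_in_imset _ _ (fun d => d :&: W) [set d in D | s d \subset W]); last first.
  move=> d d' /setIdP[dD sd] /setIdP[d'D sd'] E.
  apply/eqP; apply/negP => /negP/(nc _ _ dD d'D); apply/negP; rewrite negbK.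
  have sU : s d :|: s d' \subset W by rewrite subUset sd sd'.
  by rewrite -(setIidPr sU) !setIA E.
apply: subset_leq_card; apply/subsetP => A /imsetP[d /setIdP[dD _] ->].
by apply/imsetP; exists d.
Qed.

Lemma card_fib (X : finType) (D : {set {set X}}) (s : {set X} -> {set X}) (Z : {set X}) :
  #|[set d in D | s d \subset Z]| = \sum_(Z' : {set X} | Z' \subset Z) #|[set d in D | s d == Z']|.
Proof.
rewrite -sum1_card (partition_big s (fun Z' => Z' \subset Z)); last first.
  by move=> d; rewrite !inE => /andP[].
apply: eq_bigr => Z' sZ'; rewrite -sum1_card; apply: eq_bigl => d.
by rewrite !inE; case: eqP => [->|]; rewrite ?sZ' ?andbT ?andbF.
Qed.

Lemma card_XW_sum (X : finType) (D : {set {set X}}) (Z : {set X}) :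
  #|XW D Z| = \sum_(Z' : {set X} | Z' \subset Z) (Z' \in shattered_sets D : nat).
Proof.
rewrite -sum1_card big_mkcond /= [RHS]big_mkcond /=; apply: eq_bigr => A _.
by rewrite !inE andbC; case: (A \subset Z); case: (shatters D A).
Qed.

Lemma repmap_of_count (X : finType) (D : {set {set X}}) (s : {set X} -> {set X}) :
  nonclash D s -> (forall W : {set X}, #|XW D W| <= #|[set d in D | s d \subset W]|) ->
  is_repmap D s.
Proof.
move=> nc le.
have eqW (W : {set X}) : #|[set d in D | s d \subset W]| = #|XW D W|.
  by apply/eqP; rewrite eqn_leq le nc_le.
have fg n : forall Z : {set X}, #|Z| < n ->
    #|[set d in D | s d == Z]| = (Z \in shattered_sets D : nat).
  elim: n => // n IH Z ltZ.
  have := eqW Z; rewrite card_fib card_XW_sum.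
  rewrite (bigD1 Z) ?inE //= [in RHS](bigD1 Z) ?inE //=.
  rewrite (eq_bigr (fun Z' => (Z' \in shattered_sets D : nat))); first by move/addIn.
  move=> Z' /andP[sZ nZ]; apply: IH.
  have : Z' \proper Z by rewrite properEneq nZ.
  by move/proper_card => h; apply: leq_trans h _.
have f Z : #|[set d in D | s d == Z]| = (Z \in shattered_sets D : nat) by apply: (fg #|Z|.+1).
have sX d : d \in D -> s d \in shattered_sets D.
  move=> dD; have := f (s d); case: (s d \in _) => //= /eqP; rewrite cards_eq0 => /eqP E.
  by move/setP/(_ d): E; rewrite !inE dD eqxx.
split=> //.
- move=> d d' dD d'D E; have := f (s d); rewrite sX //= => /eqP/cards1P[e He].
  have : d \in [set e] by rewrite -He inE dD eqxx.
  have : d' \in [set e] by rewrite -He inE d'D E eqxx.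
  by rewrite !inE => /eqP -> /eqP ->.
apply/setP => A; apply/imsetP/idP => [[d dD ->]|AX]; first exact: sX.
have := f A; rewrite AX /= => /eqP/cards1P[e He].
have : e \in [set d in D | s d == A] by rewrite He inE.
by rewrite inE => /andP[eD /eqP <-]; exists e.
Qed.

Lemma repmap_nc (X : finType) (D : {set {set X}}) r : is_repmap D r -> nonclash D r.
Proof. by case. Qed.

Lemma repmap_count (X : finType) (C : {set {set X}}) r (W : {set X}) :
  is_repmap C r -> #|[set c in C | r c \subset W]| = #|XW C W|.
Proof.
case=> inj img _.
rewrite -(@card_in_imset _ _ r [set c in C | r c \subset W]); last first.
  by move=> c c' /setIdP[cC _] /setIdP[c'C _]; apply: inj.
suff -> : r @: [set c in C | r c \subset W] = XW C W by [].
apply/setP => A; apply/imsetP/idP => [[c /setIdP[cC sc] ->]|].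
  by rewrite inE sc -img andbT; apply/imsetP; exists c.
rewrite inE -img => /andP[/imsetP[c cC ->] sc]; exists c => //.
by rewrite inE cC.
Qed.

Lemma part_sub (X : finType) (D : {set {set X}}) x b : part D x b \subset D.
Proof. by apply/subsetP => d; rewrite inE => /andP[]. Qed.

Lemma half (X : finType) (C : {set {set X}}) r x b :
  is_repmap C r -> is_repmap (part C x b) (fun c => r c :\ x).
Proof.
move=> rep.
have nc : nonclash (part C x b) (fun c => r c :\ x).
  move=> d d'; rewrite !inE => /andP[dC /eqP db] /andP[d'C /eqP d'b] ndd.
  have := repmap_nc rep dC d'C ndd; apply: contra => /eqP E; apply/eqP/setP => y.
  rewrite !inE; case: (eqVneq y x) => [->|nyx]; first by rewrite db d'b.
  by move/setP/(_ y): E; rewrite !inE nyx.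
apply: repmap_of_count => // W.
have eP (b' : bool) : [set d in part C x b' | r d :\ x \subset W] =
   part [set d in C | r d :\ x \subset W] x b'.
  by apply/setP => d; rewrite !inE andbAC.
have := card_part [set d in C | r d :\ x \subset W] x; rewrite -!eP.
have -> : [set d in C | r d :\ x \subset W] = [set d in C | r d \subset x |: W].
  by apply/setP => d; rewrite !inE subDset.
rewrite (@repmap_count _ C r (x |: W) rep) => E.
have := split_le C x W.
have nc' (b' : bool) : nonclash (part C x b') (fun c => r c :\ x).
  move=> d d'; rewrite !inE => /andP[dC /eqP db] /andP[d'C /eqP d'b] ndd.
  have := repmap_nc rep dC d'C ndd; apply: contra => /eqP E'; apply/eqP/setP => y.
  rewrite !inE; case: (eqVneq y x) => [->|nyx]; first by rewrite db d'b.
  by move/setP/(_ y): E'; rewrite !inE nyx.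
have l0 := nc_le W (nc' false); have l1 := nc_le W (nc' true).
move: l0 l1 E => /= l0 l1 E; case: b {nc eP} => /=; lia.
Qed.

Lemma cubeE (X : finType) (S T c : {set X}) :
  [disjoint T & S] -> (c \in cube S T) = (c :\: S == T).
Proof.
move=> dTS; apply/imsetP/eqP => [[Z]|E].
  rewrite powersetE => sZ ->; rewrite setDUl.
  rewrite (setDidPl dTS) (_ : Z :\: S = set0) ?setU0 //.
  by apply/eqP; rewrite setD_eq0.
exists (c :&: S); first by rewrite powersetE subsetIr.
by rewrite -E setUC setID.
Qed.

Lemma repmap_ext (X : finType) (E : {set {set X}}) r r' :
  {in E, r =1 r'} -> is_repmap E r -> is_repmap E r'.
Proof.
move=> e [inj img nc]; split.
- by move=> c c' cE c'E; rewrite -!e //; apply: inj.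
- by rewrite -img; apply: eq_in_imset => c cE; rewrite e.
by move=> c c' cE c'E; rewrite -!e //; apply: nc.
Qed.

Lemma part1 (X : finType) (C : {set {set X}}) r : is_repmap C r ->
  forall S T : {set X}, [disjoint T & S] -> is_repmap (C :&: cube S T) (fun c => r c :&: S).
Proof.
move=> rep S T; have [n] := ubnP #|~: S|; elim: n S T => // n IH S T lt dTS.
case: (set_0Vmem (~: S)) => [S0|[x xS]].
  have ST : S = setT by rewrite -(setCK S) S0 setC0.
  have T0 : T = set0.
    by move: dTS; rewrite ST disjoints_subset setCT subset0 => /eqP.
  subst S T.
  have -> : C :&: cube setT set0 = C.
    apply/setP => c; rewrite inE cubeE ?setDT ?eqxx ?andbT //.
  by apply: repmap_ext rep => c _; rewrite setIT.
rewrite inE in xS.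
set S' := x |: S; set T' := T :\ x.
have dT'S' : [disjoint T' & S'].
  rewrite disjoints_subset; apply/subsetP => y; rewrite !inE => /andP[nyx yT].
  rewrite negb_or nyx /=; move: dTS; rewrite disjoints_subset => /subsetP/(_ y yT).
  by rewrite inE.
have lt' : #|~: S'| < n.
  have : ~: S' \proper ~: S.
    rewrite (_ : ~: S' = ~: S :\ x); first by apply: properD1; rewrite inE.
    by apply/setP => y; rewrite !inE negb_or andbC.
  by move/proper_card => h; apply: leq_trans h _.
have := half x (x \in T) (IH S' T' lt' dT'S').
have -> : part (C :&: cube S' T') x (x \in T) = C :&: cube S T.
  apply/setP => c; rewrite !inE (cubeE _ dT'S') (cubeE _ dTS) -andbA; congr (_ && _).
  apply/idP/idP => [/andP[/eqP E1 /eqP E2]|/eqP E].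
    apply/eqP/setP => y; move/setP/(_ y): E1; rewrite !inE.
    case: (eqVneq y x) => [->|nyx] /=; last by [].
    by rewrite xS E2.
  apply/andP; split; apply/eqP; last by rewrite -E !inE xS.
  by apply/setP => y; rewrite /T' /S' -E !inE negb_or andbA.
by apply: repmap_ext => c _; apply/setP => y; rewrite !inE; case: (eqVneq y x) => [->|]; rewrite ?(negbTE xS) ?andbF.
Qed.

Lemma nc_uniq (X : finType) (C : {set {set X}}) r (W : {set X}) d d' :
  nonclash C r -> d \in C -> d' \in C -> r d \subset W -> r d' \subset W ->
  d :&: W = d' :&: W -> d = d'.
Proof.
move=> nc dC d'C sd sd' E; apply/eqP; apply/negP => /negP/(nc _ _ dC d'C); apply/negP.
have sU : r d :|: r d' \subset W by rewrite subUset sd sd'.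
by rewrite negbK -(setIidPr sU) !setIA E.
Qed.

Lemma part3 (X : finType) (C : {set {set X}}) r : is_repmap C r ->
  forall Y : {set X}, is_repmap (restriction C Y) (rdown C r Y).
Proof.
move=> rep Y; have nc := repmap_nc rep; have [rinj rimg _] := rep.
have cnt : #|restriction C Y| <= #|[set d :&: ~: Y | d in [set d in C | r d \subset ~: Y]]|.
  rewrite (@card_in_imset _ _ (fun d => d :&: ~: Y) [set d in C | r d \subset ~: Y]); last first.
    by move=> d d' /setIdP[dC sd] /setIdP[d'C sd']; apply: (nc_uniq nc).
  by rewrite repmap_count //; apply: pajor_restr.
have eqR : [set d :&: ~: Y | d in [set d in C | r d \subset ~: Y]] = restriction C Y.
  apply/eqP; rewrite eqEcard cnt andbT; apply/subsetP => c /imsetP[d /setIdP[dC _] ->].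
  by apply/imsetP; exists d.
have key c : c \in restriction C Y ->
    exists d, [/\ d \in C, r d \subset ~: Y, d :&: ~: Y = c & rdown C r Y c = r d].
  move=> cR; have cY : [disjoint c & Y].
    move: cR => /imsetP[e _ ->]; rewrite disjoints_subset; exact: subsetIr.
  rewrite /rdown; case: pickP => [d /andP[] /setIP[dC]|H].
    rewrite (cubeE _ cY) setI_eq0 disjoints_subset => /eqP <- sd.
    by exists d; split; rewrite // setDE.
  move: (cR); rewrite -eqR => /imsetP[d /setIdP[dC sd] E].
  move: (H d); rewrite inE dC (cubeE _ cY) /= E setDE eqxx /=.
  by rewrite setI_eq0 disjoints_subset sd.
have uniq d d' : d \in C -> d' \in C -> r d \subset ~: Y -> r d' \subset ~: Y ->
    d :&: ~: Y = d' :&: ~: Y -> d = d'.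
  move=> dC d'C sd sd' E; exact: (nc_uniq nc dC d'C sd sd' E).
split.
- move=> c c' cR c'R; have [d [dC sd <- ->]] := key c cR; have [d' [d'C sd' <- ->]] := key c' c'R.
  by move/(rinj _ _ dC d'C) ->.
- apply/setP => A; apply/imsetP/idP => [[c cR ->]|].
    have [d [dC sd _ ->]] := key c cR.
    rewrite inE shatters_restr sd /=; have : r d \in [set r c | c in C] by apply/imsetP; exists d.
    by rewrite rimg inE.
  rewrite inE shatters_restr => /andP[sA shA]; have : A \in shattered_sets C by rewrite inE.
  rewrite -rimg => /imsetP[d dC eA].
  have cR : d :&: ~: Y \in restriction C Y by apply/imsetP; exists d.
  have [d' [d'C sd' E rE]] := key _ cR.
  have sd : r d \subset ~: Y by rewrite -eA.
  exists (d :&: ~: Y) => //; rewrite rE eA; by rewrite (uniq d' d).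
move=> c c' cR c'R ncc.
have [d [dC sd Ec ->]] := key c cR; have [d' [d'C sd' Ec' ->]] := key c' c'R.
have ndd : d != d' by apply: contraNneq ncc => E; rewrite -Ec -Ec' E.
rewrite -Ec -Ec'.
have := nc _ _ dC d'C ndd.
have sU : r d :|: r d' \subset ~: Y by rewrite subUset sd sd'.
by rewrite -!setIA (setIidPr sU).
Qed.

Lemma cube_decomp (X : finType) (S T e : {set X}) :
  [disjoint T & S] -> e \in cube S T -> e = T :|: (e :&: S).
Proof.
by move=> dTS; rewrite cubeE // => /eqP <-; rewrite setUC setID.
Qed.

Lemma cube_full (X : finType) (E : {set {set X}}) (S T : {set X}) :
  [disjoint T & S] -> E \subset cube S T -> shatters E S -> cube S T \subset E.
Proof.
move=> dTS sE /shattersP sh; apply/subsetP => c cK.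
have [e eE eS] := sh (c :&: S) (subsetIr _ _).
have eK := subsetP sE e eE.
by rewrite (cube_decomp dTS cK) -eS -(cube_decomp dTS eK).
Qed.

Lemma rep_img (X : finType) (E : {set {set X}}) r c :
  is_repmap E r -> c \in E -> shatters E (r c).
Proof.
case=> _ img _ cE; have : r c \in [set r c | c in E] by apply/imsetP; exists c.
by rewrite img inE.
Qed.

Lemma H1 (X : finType) (C : {set {set X}}) r c :
  is_repmap C r -> c \in C -> cube (r c) (c :\: r c) \subset C.
Proof.
move=> rep cC.
have dis : [disjoint c :\: r c & r c].
  by rewrite disjoints_subset; apply/subsetP => y; rewrite !inE => /andP[].
have rep1 := part1 rep dis.
have cK : c \in C :&: cube (r c) (c :\: r c) by rewrite inE cC cubeE ?eqxx.
have := rep_img rep1 cK; rewrite /= setIid => sh.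
have := cube_full dis (subsetIr _ _) sh.
by move=> h; apply: subset_trans h (subsetIl _ _).
Qed.

Lemma U (X : finType) (C : {set {set X}}) r (S : {set X}) d d' :
  is_repmap C r -> d \in C -> d' \in C -> d :\: S = d' :\: S ->
  r d :&: S = r d' :&: S -> d = d'.
Proof.
move=> rep dC d'C E1 E2.
have dis : [disjoint d :\: S & S].
  by rewrite disjoints_subset; apply/subsetP => y; rewrite !inE => /andP[].
have [inj _ _] := part1 rep dis.
apply: inj => //; rewrite inE ?dC ?d'C cubeE ?eqxx ?E1 //. all: try by rewrite -E1 disjoints_subset; apply/subsetP => y; rewrite !inE => /andP[]. all: by rewrite ?eqxx.
Qed.

Lemma cube_shatters (X : finType) (S T : {set X}) :
  [disjoint T & S] -> shatters (cube S T) S.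
Proof.
move=> dTS; apply/shattersP => Z sZ; exists (T :|: Z).
  by apply/imsetP; exists Z; rewrite ?powersetE.
by rewrite setIUl (setIidPl sZ) (_ : T :&: S = set0) ?set0U //; apply/eqP; rewrite setI_eq0.
Qed.

Lemma keyU (X : finType) (C : {set {set X}}) r (Y T : {set X}) :
  is_repmap C r -> T \in reduction C Y ->
  exists d, [/\ d \in C, d :\: Y = T, Y \subset r d & rup r Y T = r d :\: Y].
Proof.
move=> rep; rewrite inE => /andP[dis sub].
have rep1 := part1 rep dis.
have eK : C :&: cube Y T = cube Y T by apply/setIidPr.
have : Y \in shattered_sets (C :&: cube Y T) by rewrite inE eK cube_shatters.
case: rep1 => _ img _; rewrite -img => /imsetP[d dK eY].
rewrite /rup; case: pickP => [d' /andP[d'K /eqP e']|H].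
  exists d'; split.
  - exact: (subsetP sub).
  - by apply/eqP; rewrite -cubeE.
  - by rewrite -e' subsetIl.
  - by [].
move: (H d); rewrite -eK dK /= -eY eqxx //.
Qed.

Lemma red_shatters (X : finType) (C : {set {set X}}) (Y R : {set X}) :
  ample C -> shatters C R -> Y \subset R -> shatters (reduction C Y) (R :\: Y).
Proof.
move=> amp shR sYR; have [T0 /andP[d0 sub0]] := amp R shR.
move: d0; rewrite disjoints_subset => /subsetP d0.
move/subsetP: sYR => sYR.
apply/shattersP => Z /subsetP sZ; exists (T0 :|: Z).
  rewrite inE; apply/andP; split.
    rewrite disjoints_subset; apply/subsetP => y; rewrite !inE => /orP[yT|yZ].
      by apply/negP => yY; move: (d0 y yT); rewrite inE (sYR y yY).
    by move: (sZ y yZ); rewrite !inE => /andP[].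
  apply/subsetP => c /imsetP[Q]; rewrite powersetE => /subsetP sQ ->.
  apply: (subsetP sub0); apply/imsetP; exists (Z :|: Q); last by rewrite setUA.
  rewrite powersetE; apply/subsetP => y; rewrite inE => /orP[/sZ|/sQ/sYR //].
  by rewrite inE => /andP[].
apply/setP => y; rewrite !inE; case yZ: (y \in Z); rewrite ?orbT ?orbF /=.
  by move: (sZ y yZ); rewrite inE.
by apply/negP => /and3P[yT _ yR]; move: (d0 y yT); rewrite inE yR.
Qed.

Lemma red_shattered (X : finType) (C : {set {set X}}) (Y Z : {set X}) :
  shatters (reduction C Y) Z -> [disjoint Z & Y] /\ shatters C (Y :|: Z).
Proof.
move=> /shattersP sh.
have redP T : T \in reduction C Y -> {subset T <= ~: Y} /\ cube Y T \subset C.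
  by rewrite inE => /andP[]; rewrite disjoints_subset => /subsetP.
split.
  rewrite disjoints_subset; apply/subsetP => y yZ.
  have [T TR TZ] := sh Z (subxx Z); have [dT _] := redP T TR.
  by apply: dT; move: yZ; rewrite -TZ inE => /andP[].
apply/shattersP => P /subsetP sP.
have [T TR TZ] := sh (P :&: Z) (subsetIr _ _).
have [dT sT] := redP T TR.
exists (T :|: (P :&: Y)).
  apply: (subsetP sT); apply/imsetP; exists (P :&: Y) => //.
  by rewrite powersetE subsetIr.
apply/setP => y; move/setP/(_ y): TZ; rewrite !inE.
move: (dT y) (sP y); rewrite !inE.
case: (y \in T); case: (y \in P); case: (y \in Y); case: (y \in Z) => //=.
all: try by move=> /(_ isT).
all: try by move=> _ /(_ isT).
Qed.

Lemma setUDK' (X : finType) (A B : {set X}) : A \subset B -> A :|: (B :\: A) = B.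
Proof.
move=> /subsetP sAB; apply/setP => y; rewrite !inE.
by case yA: (y \in A) => //=; rewrite (sAB y yA).
Qed.

Lemma part2 (X : finType) (C : {set {set X}}) r : ample C -> is_repmap C r ->
  forall Y : {set X}, is_repmap (reduction C Y) (rup r Y).
Proof.
move=> amp rep Y; have [rinj rimg rnc] := rep.
split.
- move=> T T' TR T'R.
  have [d [dC dT sY ->]] := keyU rep TR; have [d' [d'C d'T sY' ->]] := keyU rep T'R.
  move=> E; have erd : r d = r d' by rewrite -(setUDK' sY) -(setUDK' sY') E.
  by rewrite -dT -d'T (rinj _ _ dC d'C erd).
- apply/setP => Z; apply/imsetP/idP => [[T TR ->]|].
    have [d [dC dT sY ->]] := keyU rep TR.
    by rewrite inE; apply: red_shatters => //; apply: rep_img rep dC.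
  rewrite inE => ZX; have [dZ shYZ] := red_shattered ZX.
  have : Y :|: Z \in shattered_sets C by rewrite inE.
  rewrite -rimg => /imsetP[d dC eYZ].
  have sY : Y \subset r d by rewrite -eYZ subsetUl.
  have hc := H1 rep dC.
  have dis1 : [disjoint d :\: Y & Y].
    by rewrite disjoints_subset; apply/subsetP => y; rewrite !inE => /andP[].
  have dis2 : [disjoint d :\: r d & r d].
    by rewrite disjoints_subset; apply/subsetP => y; rewrite !inE => /andP[].
  have sub : cube Y (d :\: Y) \subset cube (r d) (d :\: r d).
    apply/subsetP => c /imsetP[Q]; rewrite powersetE => /subsetP sQ ->.
    rewrite (cubeE _ dis2); apply/eqP/setP => y; rewrite !inE.
    move: (subsetP sY y) (sQ y).
    case: (y \in Y); case: (y \in r d); case: (y \in Q); case: (y \in d) => //=.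
    all: try by move=> /(_ isT).
    all: try by move=> _ /(_ isT).
  have TR : d :\: Y \in reduction C Y.
    rewrite inE; apply/andP; split => //; apply: subset_trans sub hc.
  exists (d :\: Y) => //.
  have [d' [d'C d'T sY' ->]] := keyU rep TR.
  have -> : d' = d.
    apply: (U (S := Y) rep d'C dC d'T).
    by rewrite (setIidPr sY) (setIidPr sY').
  rewrite -eYZ; apply/setP => y; rewrite !inE.
  move: dZ; rewrite disjoints_subset => /subsetP/(_ y); rewrite inE.
  by case: (y \in Y); case: (y \in Z) => //= /(_ isT).
move=> T T' TR T'R nTT'.
have [d [dC dT sY ->]] := keyU rep TR; have [d' [d'C d'T sY' ->]] := keyU rep T'R.
apply/negP => /eqP E; move/negP: nTT'; apply; apply/eqP.
have dd' : d = d'.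
  apply: (U (S := Y :|: ~: (r d :|: r d')) rep dC d'C).
    apply/setP => y; move/setP/(_ y): E; rewrite -dT -d'T !inE.
    case: (y \in Y); case: (y \in d); case: (y \in d'); case: (y \in r d); case: (y \in r d') => //=.
  apply/setP => y; rewrite !inE; move: (subsetP sY y) (subsetP sY' y).
  case: (y \in Y); case: (y \in r d); case: (y \in r d') => //=.
  all: try by move=> /(_ isT).
  all: try by move=> _ /(_ isT).
by rewrite -dT -d'T dd'.
Qed.

Unset Implicit Arguments.

Theorem proposition6p6 (X : finType) (C : {set {set X}})
    (r : {set X} -> {set X}) :
  ample C -> is_repmap C r ->
  [/\ (* (1) for every cube B = cube S T of 2^X (support S, tag T ⊆ X \ S) *)
      (forall S T : {set X}, [disjoint T & S] ->
         is_repmap (C :&: cube S T) (fun c => r c :&: S)),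
      (* (2) *)
      (forall Y : {set X}, is_repmap (reduction C Y) (rup r Y)) &
      (* (3) *)
      (forall Y : {set X}, is_repmap (restriction C Y) (rdown C r Y))].
Proof.
move=> amp rep; split.
- exact: part1 rep.
- exact: part2 amp rep.
- exact: part3 rep.
Qed.
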